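(* For every traditional polynomial scheme, there exists a constant $K>0$ and an FTP code such that the communication rate of the FTP code is higher than that of the traditional polynomial scheme, whenever the matrix dimensions $a$, $b$, and $c$ are such that $b \left( \frac{1}{a}+\frac{1}{c} \right) < K$.
   Context: Setting (secure distributed matrix multiplication): a user has matrices $A \in \mathbb{F}_q^{a \times b}$ and $B \in \mathbb{F}_q^{b \times c}$ and wishes to compute $AB$ with the help of $N$ honest-but-curious servers, such that no set of $T$ colluding servers learns any information about $A$ or $B$ ($T$-security). The matrices are partitioned by the inner product partitioning $A = \begin{bmatrix}A_1 & \cdots & A_L\end{bmatrix}$, $B^{\intercal} = \begin{bmatrix}B_1^{\intercal} & \cdots & B_L^{\intercal}\end{bmatrix}$ so that $AB = A_1B_1+\cdots+A_LB_L$ ($L$ is the partitioning parameter). A traditional polynomial scheme uses a polynomial $h(x)=f(x)g(x)$ whose coefficients encode the products $A_kB_\ell$; the user uploads evaluations $f(\alpha_i), g(\alpha_i)$ to Server $i$, each server computes $h(\alpha_i)$ and sends this full evaluation back, with the construction being $T$-secure and allowing the user to reconstruct $AB$ from all $N$ evaluations; its recovery threshold (number of servers) $N'$ satisfies $N'>L$. An FTP (field trace polynomial) code with partitioning parameter $L$ and security parameter $T$ works over $\mathbb{F}_q$ with $q=q_0^{p_1p_2\cdots p_L}$ for a prime power $q_0$ and primes $p_1<\cdots<p_L$; with $N_i = p_i + 2L + 2T - 2$ it uses $N_L$ servers, and instead of full evaluations the servers send field traces of (scaled) evaluations of $h$ to subfields; it is $T$-secure, decodable, and has total communication rate $\left(\frac{N_Lb}{L}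 \left( \frac{1}{a}+\frac{1}{c} \right)+\sum_{i=1}^L\frac{N_i}{p_i}\right)^{-1}$. The total communication rate of a scheme is the number of symbols of $AB$ divided by the total (upload plus download) communication cost. *)

(* Defs.v *)
From Stdlib Require Import Reals Lra Lia ZArith Znumtheory List Sorted.
Open Scope R_scope.

Definition nat_prime (p : nat) : Prop := prime (Z.of_nat p).
Definition prime_power (q : nat) : Prop :=
  exists p k : nat, nat_prime p /\ (1 <= k)%nat /\ q = (p ^ k)%nat.

(** ---------- Traditional polynomial scheme ----------
    Parameters: partitioning parameter L, security parameter T,
    recovery threshold (number of servers) N'.  Server i receives
    f(alpha_i) in F^{a x b/L} and g(alpha_i) in F^{b/L x c} and returns
    the full evaluation h(alpha_i) in F^{a x c}. *)
Record TradScheme := { ts_L : nat; ts_T : nat; ts_N : nat }.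

Definition valid_trad (s : TradScheme) : Prop :=
  (1 <= ts_L s)%nat /\ (1 <= ts_T s)%nat /\ (ts_L s < ts_N s)%nat.

Definition trad_upload (s : TradScheme) (a b c : nat) : R :=
  INR (ts_N s) * (INR a * INR b / INR (ts_L s) + INR b * INR c / INR (ts_L s)).

Definition trad_download (s : TradScheme) (a c : nat) : R :=
  INR (ts_N s) * (INR a * INR c).

(** total communication rate = #symbols of AB / (upload + download) *)
Definition trad_rate (s : TradScheme) (a b c : nat) : R :=
  INR a * INR c / (trad_upload s a b c + trad_download s a c).

(** ---------- FTP code ----------
    Parameters: L, T, prime power q0, primes p_1 < ... < p_L
    (field F_q with q = q0^(p_1 ... p_L)). *)
Record FTPCode := { ftp_L : nat; ftp_T : nat; ftp_q0 : nat; ftp_primes : list nat }.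

Definition valid_ftp (C : FTPCode) : Prop :=
  (1 <= ftp_L C)%nat /\ (1 <= ftp_T C)%nat /\ prime_power (ftp_q0 C) /\
  length (ftp_primes C) = ftp_L C /\
  Forall nat_prime (ftp_primes C) /\
  StronglySorted lt (ftp_primes C).

Definition ftp_Ni (C : FTPCode) (p : nat) : R :=
  INR p + 2 * INR (ftp_L C) + 2 * INR (ftp_T C) - 2.

Definition ftp_pL (C : FTPCode) : nat := nth (ftp_L C - 1) (ftp_primes C) 0%nat.

Definition ftp_rate (C : FTPCode) (a b c : nat) : R :=
  / (ftp_Ni C (ftp_pL C) * INR b / INR (ftp_L C) * (1 / INR a + 1 / INR c)
     + fold_right Rplus 0 (map (fun p => ftp_Ni C p / INR p) (ftp_primes C))).

(* Main.v *)
Require Import Defs.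
From Stdlib Require Import Reals.
From Stdlib Require Import ZArith Znumtheory Lia Lra List Sorted.
From mathcomp Require ssreflect ssrbool eqtype ssrnat div prime.
Open Scope R_scope.

Lemma mc_prime_Z (p : nat) : is_true (prime.prime p) -> Znumtheory.prime (Z.of_nat p).
Proof.
  intro H. pose proof (ssrbool.elimT prime.primeP H) as [H2 Hd].
  apply (ssrbool.elimT ssrnat.leP) in H2.
  apply prime_alt. split; [lia|].
  intros n [Hn1 Hn2] [k Hk].
  assert (Hkp : (0 < k)%Z) by nia.
  assert (Hp : p = (Z.to_nat k * Z.to_nat n)%nat).
  { apply Nat2Z.inj. rewrite Nat2Z.inj_mul, !Z2Nat.id; lia. }
  specialize (Hd (Z.to_nat n)).
  assert (Hdv : is_true (div.dvdn (Z.to_nat n) p)).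
  { rewrite Hp. exact (div.dvdn_mull (Z.to_nat k) (div.dvdnn (Z.to_nat n))). }
  specialize (Hd Hdv). apply Bool.orb_true_iff in Hd.
  destruct Hd as [Hd|Hd]; apply (ssrbool.elimT eqtype.eqP) in Hd; lia.
Qed.

Lemma primes_list : forall n m, exists l, length l = n /\
  Forall (fun p => nat_prime p /\ (m < p)%nat) l /\ StronglySorted lt l.
Proof.
  induction n; intros m.
  - exists nil. repeat constructor.
  - destruct (prime.prime_above m) as [p Hp Hpr].
    apply (ssrbool.elimT ssrnat.ltP) in Hp.
    destruct (IHn p) as [l [Hl [HF HS]]].
    exists (p :: l). split; [simpl; lia|]. split.
    + constructor. split; [apply mc_prime_Z; exact Hpr| exact Hp].
      eapply Forall_impl; [|exact HF]. simpl. intros x [? ?]. split; auto; lia.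
    + constructor; auto. eapply Forall_impl; [|exact HF]. simpl. intros x [? ?]. exact H0.
Qed.

Lemma Rdiv_le_0_compat' (a b : R) : 0 <= a -> 0 < b -> 0 <= a / b.
Proof. intros. unfold Rdiv. apply Rmult_le_pos; auto. left; apply Rinv_0_lt_compat; auto. Qed.

Lemma fold_bounds (f : nat -> R) (M : nat) (e : R) :
  (forall p, (M < p)%nat -> 1 <= f p <= 1 + e) ->
  forall l, Forall (fun p => (M < p)%nat) l ->
  INR (length l) <= fold_right Rplus 0 (map f l) <= INR (length l) * (1 + e).
Proof.
  intros Hf l Hl. induction Hl as [|x l Hx Hl IH]; cbn [length map fold_right].
  - simpl; lra.
  - rewrite S_INR. specialize (Hf x Hx). lra.
Qed.

Theorem theorem2 :
  forall s : TradScheme, valid_trad s ->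
  exists K : R, 0 < K /\
  exists C : FTPCode, valid_ftp C /\ ftp_L C = ts_L s /\ ftp_T C = ts_T s /\
    forall a b c : nat, (0 < a)%nat -> (0 < b)%nat -> (0 < c)%nat ->
      INR b * (1 / INR a + 1 / INR c) < K ->
      trad_rate s a b c < ftp_rate C a b c.
Proof.
  intros s [HL [HT HN]].
  set (L := ts_L s) in *. set (T := ts_T s) in *. set (N := ts_N s) in *.
  set (M := (L * (2 * L + 2 * T))%nat).
  destruct (primes_list L M) as [l [Hlen [HF HS]]].
  set (C := {| ftp_L := L; ftp_T := T; ftp_q0 := 2; ftp_primes := l |}).
  set (cc := 2 * INR L + 2 * INR T - 2).
  set (e := cc / INR (M + 1)).
  assert (HLr : 1 <= INR L) by (apply (le_INR 1); lia).
  assert (HTr : 1 <= INR T) by (apply (le_INR 1); lia).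
  assert (HNr : INR L + 1 <= INR N) by (rewrite <- S_INR; apply le_INR; lia).
  assert (HM1 : 0 < INR (M + 1)) by (apply lt_0_INR; lia).
  assert (HMe : INR (M + 1) = INR L * (2 * INR L + 2 * INR T) + 1).
  { unfold M. rewrite plus_INR, mult_INR, plus_INR, !mult_INR. simpl. lra. }
  assert (Hcc : 0 <= cc) by (unfold cc; lra).
  assert (HLe : INR L * e < 1).
  { apply (Rmult_lt_reg_r (INR (M+1))); auto.
    replace (INR L * e * INR (M + 1)) with (INR L * cc) by (unfold e; field; lra).
    rewrite HMe. unfold cc. nra. }
  assert (Hterm : forall p, (M < p)%nat -> 1 <= ftp_Ni C p / INR p <= 1 + e).
  { intros p Hp. assert (HpM : INR (M + 1) <= INR p) by (apply le_INR; lia).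
    assert (Hp0 : 0 < INR p) by lra.
    assert (Heq : ftp_Ni C p / INR p = 1 + cc / INR p).
    { unfold ftp_Ni, cc. simpl. field. lra. }
    rewrite Heq. split.
    - assert (0 <= cc / INR p) by (apply Rdiv_le_0_compat'; lra). lra.
    - apply Rplus_le_compat_l. unfold e, Rdiv. apply Rmult_le_compat_l; auto.
      apply Rinv_le_contravar; lra. }
  assert (HF' : Forall (fun p => (M < p)%nat) l).
  { eapply Forall_impl; [|exact HF]. simpl. intros x [? ?]; auto. }
  pose proof (fold_bounds _ _ _ Hterm l HF') as [HS1 HS2].
  rewrite Hlen in HS1, HS2.
  set (S := fold_right Rplus 0 (map (fun p => ftp_Ni C p / INR p) l)) in *.
  set (NL := ftp_Ni C (ftp_pL C)).
  assert (HNL : 2 <= NL).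
  { unfold NL, ftp_Ni. simpl. pose proof (pos_INR (ftp_pL C)). lra. }
  assert (HSN : S < INR N) by nra.
  exists ((INR N - S) * INR L / (NL + 1)). split.
  { apply Rdiv_lt_0_compat; nra. }
  exists C. split; [|split; [reflexivity| split; [reflexivity|]]].
  { unfold valid_ftp. simpl. split; [lia|]. split; [lia|]. split.
    - exists 2%nat, 1%nat. split; [exact prime_2|]. split; [lia|reflexivity].
    - split; [exact Hlen|]. split; [|exact HS].
      eapply Forall_impl; [|exact HF]. simpl. intros x [? ?]; auto. }
  intros a b c Ha Hb Hc Hx.
  assert (Ha0 : 0 < INR a) by (apply lt_0_INR; lia).
  assert (Hb0 : 0 < INR b) by (apply lt_0_INR; lia).
  assert (Hc0 : 0 < INR c) by (apply lt_0_INR; lia).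
  set (x := INR b * (1 / INR a + 1 / INR c)) in *.
  assert (Hx0 : 0 < x).
  { unfold x. apply Rmult_lt_0_compat; auto.
    assert (0 < 1 / INR a) by (apply Rdiv_lt_0_compat; lra).
    assert (0 < 1 / INR c) by (apply Rdiv_lt_0_compat; lra). lra. }
  assert (Htr : trad_rate s a b c = / (INR N * x / INR L + INR N)).
  { unfold trad_rate, trad_upload, trad_download, x. fold L N.
    field. repeat split; try lra.
    assert (0 < INR N) by lra.
    apply Rgt_not_eq. apply Rlt_gt.
    repeat first [apply Rplus_lt_0_compat | apply Rmult_lt_0_compat | apply Rdiv_lt_0_compat | apply Rinv_0_lt_compat]; lra. }
  assert (Hfr : ftp_rate C a b c = / (NL * x / INR L + S)).
  { unfold ftp_rate. fold NL. unfold x. replace (ftp_L C) with L by reflexivity.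
    replace (ftp_primes C) with l by reflexivity. fold S. f_equal. unfold Rdiv. ring. }
  rewrite Htr, Hfr.
  assert (Hx1 : x * (NL + 1) < (INR N - S) * INR L).
  { apply (Rmult_lt_compat_r (NL + 1)) in Hx; [|lra].
    unfold Rdiv in Hx. rewrite Rmult_assoc, Rinv_l in Hx by lra. lra. }
  assert (Hk : NL * x / INR L < INR N - S).
  { apply (Rmult_lt_reg_r (INR L)); [lra|].
    unfold Rdiv. rewrite Rmult_assoc, Rinv_l by lra. nra. }
  assert (H0 : 0 <= INR N * x / INR L).
  { apply Rdiv_le_0_compat'; nra. }
  assert (Hpos : 0 <= NL * x / INR L) by (apply Rdiv_le_0_compat'; nra).
  apply Rinv_lt_contravar.
  - apply Rmult_lt_0_compat; lra.
  - simpl; lra.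
Qed.
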